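(* Let $F$ be a field, $A$ a set, and $E$ a thin set of functions $A\to F$. Then the thinly independent subsets of $E$ form the independent sets of a matroid on $E$.
   Context: A set $X$ of functions $A\to F$ is thin if for every $a\in A$ only finitely many $x\in X$ satisfy $x(a)\neq 0$; for thin $X$ and coefficients $\alpha_x\in F$, $\sum_{x\in X}\alpha_x x$ denotes the pointwise sum (well defined by thinness). A set of functions $A\to F$ is thinly independent if for every thin subset $X$ and every family $(\alpha_x)_{x\in X}$ of elements of $F$, $\sum_{x\in X}\alpha_x x=\mathbf 0$ implies $\alpha_x=0$ for all $x\in X$. Matroids may be infinite: a matroid on $E$ is a family $\mathcal I\subseteq 2^E$ (the independent sets) with (I1) $\emptyset\in\mathcal I$; (I2) $\mathcal I$ closed under subsets; (I3) for every non-maximal $I\in\mathcal I$ and maximal $I'\in\mathcal I$ there is $x\in I'\setminus I$ with $I\cup\{x\}\in\mathcal I$; (IM) whenever $I\subseteq X\subseteq E$ and $I\in\mathcal I$, the set $\{I'\in\mathcal I:I\subseteq I'\subseteq X\}$ has a maximal element. *)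

(* Defs.v *)
From HB Require Import structures.
From mathcomp Require Import all_boot all_order all_algebra.
From mathcomp Require Import boolp classical_sets functions cardinality fsbigop.
Set Implicit Arguments. Unset Strict Implicit. Unset Printing Implicit Defensive.
Import GRing.Theory.
Local Open Scope classical_set_scope.
Local Open Scope ring_scope.

Definition thin (F : fieldType) (A : Type) (X : set (A -> F)) : Prop :=
  forall a : A, finite_set [set x | X x /\ x a != 0].

Definition thin_sum (F : fieldType) (A : Type) (X : set (A -> F))
  (alpha : (A -> F) -> F) : A -> F :=
  fun a => \sum_(x \in [set x | X x /\ x a != 0]) (alpha x * x a).

Definition thinly_independent (F : fieldType) (A : Type) (S : set (A -> F)) : Prop :=
  forall (X : set (A -> F)) (alpha : (A -> F) -> F),
    X `<=` S -> thin X ->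
    thin_sum X alpha = (fun _ => 0) ->
    forall x, X x -> alpha x = 0.

Definition maximal_in (T : Type) (Fam : set (set T)) (M : set T) : Prop :=
  Fam M /\ forall N, Fam N -> M `<=` N -> N = M.

Definition matroid (T : Type) (E : set T) (I : set (set T)) : Prop :=
  [/\ (forall J, I J -> J `<=` E),
      I set0,
      (forall J J', I J -> J' `<=` J -> I J'),
      (forall J J', I J -> ~ maximal_in I J -> maximal_in I J' ->
         exists2 x, (J' `\` J) x & I (J `|` [set x])) &
      (forall J X, J `<=` X -> X `<=` E -> I J ->
         exists M, maximal_in [set J' | I J' /\ J `<=` J' /\ J' `<=` X] M)].

(* Main.v *)
Require Import Defs.
From HB Require Import structures.
From mathcomp Require Import all_boot all_order all_algebra.
From mathcomp Require Import boolp classical_sets functions cardinality fsbigop.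
Set Implicit Arguments. Unset Strict Implicit. Unset Printing Implicit Defensive.
Import GRing.Theory.
Local Open Scope classical_set_scope.
Local Open Scope ring_scope.

Lemma chain_list (I : Type) (U : eqType) (C : set I) (R : I -> I -> Prop)
  (d : I -> U -> Prop) (Q : U -> Prop) (i0 : I) :
  C i0 -> (forall i j, R i j -> forall y, d i y -> d j y) -> total_on C R ->
  forall l : seq U, (forall y, y \in l -> Q y -> exists i, C i /\ d i y) ->
  exists k, C k /\ forall y, y \in l -> Q y -> d k y.
Proof.
move=> Ci0 mono tot; elim => [|y l IH] H; first by exists i0.
have [k [Ck Hk]] : exists k, C k /\ forall z, z \in l -> Q z -> d k z.
  by apply: IH => z zl; apply: H; rewrite inE zl orbT.
case: (pselect (Q y)) => Qy; last first.
  exists k; split => // z; rewrite inE => /orP[/eqP -> //|zl]; exact: Hk.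
have [i [Ci dy]] := H y (mem_head _ _) Qy.
have [Rik|Rki] := tot i k Ci Ck.
  exists k; split => // z; rewrite inE => /orP[/eqP -> _|zl]; [exact: mono Rik _ dy|exact: Hk].
exists i; split => // z; rewrite inE => /orP[/eqP -> //|zl Qz]; exact: mono Rki _ (Hk _ zl Qz).
Qed.

Section Thin.
Variables (F : fieldType) (A : Type) (E : set (A -> F)).
Hypothesis thinE : thin E.

Definition veval (s : seq (A * F)) (x : A -> F) : F := \sum_(p <- s) p.2 * x p.1.
Definition tsum (al : (A -> F) -> F) (a : A) : F :=
  \sum_(x \in [set x | E x /\ x a != 0]) al x * x a.
Definition Supp (s : seq (A * F)) := [set x | E x /\ veval s x != 0].
Definition pair (al : (A -> F) -> F) s := \sum_(x \in Supp s) al x * veval s x.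
Definition sc (c : F) (s : seq (A * F)) := map (fun p => (p.1, c * p.2)) s.

Lemma veval_cat s1 s2 x : veval (s1 ++ s2) x = veval s1 x + veval s2 x.
Proof. by rewrite /veval big_cat. Qed.

Lemma veval_sc c s x : veval (sc c s) x = c * veval s x.
Proof. by rewrite /veval big_map mulr_sumr; apply: eq_bigr => p _ /=; rewrite mulrA. Qed.

Lemma veval1 a x : veval [:: (a, 1)] x = x a.
Proof. by rewrite /veval big_seq1 mul1r. Qed.

Lemma fsbig_one (P : set (A -> F)) (f : (A -> F) -> F) e :
  (forall x, P x -> x != e -> f x = 0) -> (~ P e -> f e = 0) ->
  \sum_(x \in P) f x = f e.
Proof.
move=> H1 H2; case: (pselect (P e)) => Pe.
  rewrite -(fsbig_widen [set e] P f) ?fsbig_set1 //; first by move=> x ->.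
  move=> x [Px /= xne]; apply: H1 => //; apply/eqP; exact: xne.
rewrite fsbig1 ?H2 // => x Px; apply: H1 => //; apply/eqP => xe; by apply: Pe; rewrite -xe.
Qed.

Lemma Supp_fin s : finite_set (Supp s).
Proof.
elim: s => [|p s IH].
  apply: (sub_finite_set (B := set0)); last exact: finite_set0.
  by move=> x [_]; rewrite /veval big_nil eqxx.
apply: (sub_finite_set (B := [set x | E x /\ x p.1 != 0] `|` Supp s)).
  move=> x [Ex]; rewrite /veval big_cons => H.
  case: (eqVneq (x p.1) 0) => xp; last by left.
  by right; split => //; move: H; rewrite xp mulr0 add0r.
by rewrite finite_setU; split => //; apply: (sub_finite_set _ (thinE p.1)) => x [].
Qed.

Lemma notSupp s x : E x -> ~ Supp s x -> veval s x = 0.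
Proof. by move=> Ex nS; apply: contrapT => h; apply: nS; split => //; apply/eqP. Qed.

Lemma pair_cat al s1 s2 : pair al (s1 ++ s2) = pair al s1 + pair al s2.
Proof.
rewrite /pair.
have Dfin : finite_set (Supp s1 `|` Supp s2) by rewrite finite_setU; split; apply: Supp_fin.
have wid s : Supp s `<=` Supp s1 `|` Supp s2 ->
    \sum_(x \in Supp s) al x * veval s x = \sum_(x \in Supp s1 `|` Supp s2) al x * veval s x.
  move=> sub; apply: fsbig_widen => // x [Dx /= nS].
  have Ex : E x by case: Dx => -[].
  by rewrite notSupp // mulr0.
rewrite wid; last first.
  move=> x [Ex]; rewrite veval_cat => H.
  case: (eqVneq (veval s1 x) 0) => h; last by left.
  by right; split => //; move: H; rewrite h add0r.
rewrite (wid s1); last by move=> x h; left.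
rewrite (wid s2); last by move=> x h; right.
rewrite -fsbig_split //; apply: eq_fsbigr => x _.
by rewrite veval_cat mulrDr.
Qed.

Lemma pair_nil al : pair al [::] = 0.
Proof. by rewrite /pair fsbig1 // => x _; rewrite /veval big_nil mulr0. Qed.

Lemma pair_one al p : pair al [:: p] = p.2 * tsum al p.1.
Proof.
have ve x : veval [:: p] x = p.2 * x p.1 by rewrite /veval big_seq1.
case: (eqVneq p.2 0) => p0.
  by rewrite p0 mul0r /pair fsbig1 // => x _; rewrite ve p0 mul0r mulr0.
rewrite /pair /tsum mulr_fsumr.
have -> : Supp [:: p] = [set x | E x /\ x p.1 != 0].
  apply/seteqP; split => x [Ex h]; split => //; move: h; rewrite ve.
    by rewrite mulf_eq0 negb_or => /andP[].
  by move=> h; rewrite mulf_neq0.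
by apply: eq_fsbigr => x _; rewrite ve mulrCA.
Qed.

Lemma fun_pair al s : pair al s = \sum_(p <- s) p.2 * tsum al p.1.
Proof.
elim: s => [|p s IH]; first by rewrite pair_nil big_nil.
by rewrite -cat1s pair_cat pair_one IH big_cons.
Qed.

Lemma pair_sc al c s : pair al (sc c s) = c * pair al s.
Proof.
rewrite !fun_pair big_map mulr_sumr; apply: eq_bigr => p _ /=; by rewrite mulrA.
Qed.

Lemma pair_single al s e : E e -> (forall x, E x -> x != e -> al x * veval s x = 0) ->
  pair al s = al e * veval s e.
Proof.
move=> Ee H; rewrite /pair; apply: fsbig_one.
  by move=> x [Ex _] xe; apply: H.
by move=> nS; rewrite notSupp // mulr0.
Qed.

Lemma tsum_delta al c x0 a : E x0 ->
  tsum (fun x => al x + (if x == x0 then c else 0)) a = tsum al a + c * x0 a.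
Proof.
move=> Ex0; rewrite /tsum.
under eq_fsbigr do rewrite mulrDl.
rewrite fsbig_split //; congr (_ + _).
rewrite (fsbig_one (e := x0)); first by rewrite eqxx.
  by move=> x _ xe; rewrite (negbTE xe) mul0r.
move=> h; rewrite eqxx; case: (eqVneq (x0 a) 0) => [->|xa]; first by rewrite mulr0.
by exfalso; apply: h.
Qed.

Lemma pair_delta al c x0 s : E x0 ->
  pair (fun x => al x + (if x == x0 then c else 0)) s = pair al s + c * veval s x0.
Proof.
move=> Ex0; rewrite !fun_pair /veval mulr_sumr -big_split; apply: eq_bigr => p _ /=.
by rewrite tsum_delta // mulrDr mulrCA.
Qed.

Definition Ind (S : set (A -> F)) := forall al : (A -> F) -> F,
  (forall x, al x != 0 -> S x) -> (forall a, tsum al a = 0) -> forall x, al x = 0.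

Lemma thin_sum_tsum (X : set (A -> F)) al : X `<=` E ->
  thin_sum X al = tsum (fun x => if x \in X then al x else 0).
Proof.
move=> XE; apply: funext => a; rewrite /thin_sum /tsum.
rewrite (eq_fsbigr (fun x => (if x \in X then al x else 0) * x a)); last first.
  by move=> x /set_mem [Xx _]; rewrite mem_set.
apply: fsbig_widen.
- by move=> x [Xx h]; split => //; apply: XE.
- move=> x [[Ex h] /= nX]; rewrite /preimage /= ifF ?mul0r //.
  by apply/negP => /set_mem Xx; apply: nX; split.
Qed.

Lemma IndE S : S `<=` E -> thinly_independent S <-> Ind S.
Proof.
move=> SE; split.
  move=> ti al sup ts x; case: (eqVneq (al x) 0) => // h.
  apply: (ti S al) => //; last exact: sup.
    by move=> a; apply: (sub_finite_set _ (thinE a)) => y [Sy ?]; split => //; apply: SE.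
  rewrite thin_sum_tsum //.
  have -> : (fun x => if x \in S then al x else 0) = al.
    apply: funext => y; case: ifPn => // /negP nS.
    apply/esym/eqP; apply: contrapT => h2; apply: nS; apply: mem_set; apply: sup.
    by apply/negP.
  by apply: funext => a; apply: ts.
move=> I X al XS thX ts x Xx.
suff H : forall y, (fun y => if y \in X then al y else 0) y = 0.
  by have := H x; rewrite /= (mem_set Xx).
apply: I.
  move=> y; case: ifPn => [Xy _|_]; last by rewrite eqxx.
  by apply: XS; apply: set_mem.
move=> a; rewrite -thin_sum_tsum ?ts //; exact: subset_trans XS SE.
Qed.

Definition wit (S : set (A -> F)) e := exists s, veval s e = 1 /\
  forall x, S x -> x != e -> veval s x = 0.

Lemma ind_of_wit S : S `<=` E -> (forall e, S e -> wit S e) -> Ind S.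
Proof.
move=> SE W al sup ts x; case: (eqVneq (al x) 0) => // h.
have [s [s1 s0]] := W x (sup x h).
have : pair al s = 0 by rewrite fun_pair big1 // => p _; rewrite ts mulr0.
rewrite (pair_single (SE x (sup x h))) ?s1 ?mulr1 // => y Ey yx.
case: (eqVneq (al y) 0) => [->|hy]; first by rewrite mul0r.
by rewrite s0 ?mulr0 //; apply: sup.
Qed.

Lemma Ind_sub S S' : Ind S -> S' `<=` S -> Ind S'.
Proof. by move=> I sub al sup; apply: I => x /sup /sub. Qed.

Lemma Ind0 : Ind set0.
Proof. by move=> al sup _ x; apply/eqP; apply: contrapT => /negP /sup. Qed.

Lemma wit_scale S e s : veval s e != 0 -> (forall x, S x -> x != e -> veval s x = 0) ->
  wit S e.
Proof.
move=> ne H; exists (sc (veval s e)^-1 s); split; first by rewrite veval_sc mulVf.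
by move=> x Sx xe; rewrite veval_sc (H x Sx xe) mulr0.
Qed.

Lemma wit_of_ind S e : S `<=` E -> Ind S -> S e -> wit S e.
Proof.
move=> SE IS Se; apply: contrapT => nW.
pose good (p : ((A -> F) -> Prop) * ((A -> F) -> F)) :=
  [/\ p.1 `<=` S, p.1 e, p.2 e = 1, (forall x, p.2 x != 0 -> p.1 x) &
     forall s, (forall x, S x -> ~ p.1 x -> veval s x = 0) -> pair p.2 s = 0].
pose Rel (p q : ((A -> F) -> Prop) * ((A -> F) -> F)) :=
  p.1 `<=` q.1 /\ forall x, p.1 x -> p.2 x = q.2 x.
have base : good ([set e], fun x => if x == e then 1 else 0).
  split => /=.
  - by move=> x ->.
  - by [].
  - by rewrite eqxx.
  - by move=> x; case: (eqVneq x e) => [//|_]; rewrite eqxx.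
  - move=> s H.
    rewrite (pair_single (SE e Se)); last by move=> x _ xe; rewrite (negbTE xe) mul0r.
    rewrite eqxx mul1r; apply/eqP; apply: contrapT => /negP ne; apply: nW.
    apply: (wit_scale ne) => x Sx xe; apply: H => // xe'.
    by rewrite xe' eqxx in xe.
pose T := {p | good p}.
have [M Mmax] : exists M : T, premaximal (fun p q : T => `[< Rel (sval p) (sval q) >]) M.
  apply: (ZL_preorder (exist _ _ base)).
- by move=> t; apply/asboolP; split.
- move=> r s t /asboolP [h1 h2] /asboolP [h3 h4]; apply/asboolP; split.
    exact: subset_trans h1 h3.
  by move=> x rx; rewrite h2 // h4 //; exact: h1.
- move=> C tot.
  case: (pselect (exists t, C t)) => [[t1 Ct1]|nC]; last first.
    by exists (exist _ _ base) => s Cs; exfalso; apply: nC; exists s.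
  pose DU x := exists t, C t /\ (sval t).1 x.
  pose alU x := match pselect (DU x) with
                | left h => (sval (proj1_sig (cid h))).2 x | right _ => 0 end.
  have cons t x : C t -> (sval t).1 x -> alU x = (sval t).2 x.
    move=> Ct tx; rewrite /alU; case: pselect => [h|nh]; last by exfalso; apply: nh; exists t.
    case: (cid h) => t' [Ct' t'x] /=.
    by have := tot t t' Ct Ct'; case => /asboolP [h1 h2]; [rewrite h2 | rewrite -h2].
  have goodU : good (DU, alU).
    split => /=.
    - by move=> x [t [Ct tx]]; case: (svalP t) => sub _ _ _ _; exact: sub.
    - by exists t1; split => //; case: (svalP t1).
    - by rewrite (cons t1) //; case: (svalP t1).
    - move=> x; rewrite /alU; case: pselect => [h _|_]; [exact: h | by rewrite eqxx].
    - move=> s H.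
      have [l Hl] := (finite_seqP _).1 (Supp_fin s).
      have [k [Ck Hk]] : exists k, C k /\ forall y, y \in l -> S y -> (sval k).1 y.
        apply: (chain_list (R := fun p q : T => `[< Rel (sval p) (sval q) >]) Ct1 _ tot).
          by move=> i j /asboolP [h _].
        move=> y yl Sy; apply: contrapT => nD.
        have : Supp s y by rewrite Hl.
        by case => _; rewrite H // eqxx.
      case: (svalP k) => subk _ _ supk Pk.
      have -> : pair alU s = pair (sval k).2 s.
        apply: eq_fsbigr => x /set_mem [Ex vx]; congr (_ * _).
        case: (pselect (S x)) => Sx.
          have kx : (sval k).1 x.
            apply: Hk => //; have : Supp s x by split.
            by rewrite Hl.
          exact: cons.
        have -> : alU x = 0.
          rewrite /alU; case: pselect => // h; exfalso.
          have [t [Ct tx]] := h; apply: Sx; case: (svalP t) => sub _ _ _ _; exact: sub.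
        by apply/esym/eqP; apply: contrapT => /negP nz; exact: Sx (subk _ (supk _ nz)).
      apply: Pk => x Sx nk; apply/eqP; apply: contrapT => /negP vx; apply: nk.
      apply: Hk => //; have : Supp s x by split => //; apply: SE.
      by rewrite Hl.
  exists (exist _ _ goodU) => t Ct; apply/asboolP; split => /=.
    by move=> x tx; exists t.
  by move=> x tx; rewrite (cons t x).
case: (svalP M) => subM eM alM supM PM.
have SD : S `<=` (sval M).1.
  move=> x0 Sx0; apply: contrapT => nD.
  have ax0 : (sval M).2 x0 = 0 by apply/eqP; apply: contrapT => /negP /supM.
  have [c Hc] : exists c, forall s,
      (forall x, S x -> ~ (sval M).1 x -> x != x0 -> veval s x = 0) ->
      pair (sval M).2 s + c * veval s x0 = 0.
    case: (pselect (exists s0, veval s0 x0 = 1 /\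
      forall x, S x -> ~ (sval M).1 x -> x != x0 -> veval s0 x = 0)) => [[s0 [s01 s00]]|ns].
      exists (- pair (sval M).2 s0) => s Hs.
      have : pair (sval M).2 (s ++ sc (- veval s x0) s0) = 0.
        apply: PM => x Sx nx; rewrite veval_cat veval_sc.
        case: (eqVneq x x0) => [->|xx0]; first by rewrite s01 mulr1 addrN.
        by rewrite Hs // s00 // mulr0 addr0.
      by rewrite pair_cat pair_sc => h; rewrite mulNr; rewrite mulNr mulrC in h.
    exists 0 => s Hs; rewrite mul0r addr0; apply: PM => x Sx nx.
    case: (eqVneq x x0) => [->|xx0]; last exact: Hs.
    apply/eqP; apply: contrapT => /negP ne; apply: ns.
    exists (sc (veval s x0)^-1 s); split; first by rewrite veval_sc mulVf.
    by move=> y Sy ny yx; rewrite veval_sc (Hs y Sy ny yx) mulr0.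
  pose al' := fun x => (sval M).2 x + (if x == x0 then c else 0).
  pose D' := (sval M).1 `|` [set x0].
  have good' : good (D', al').
    split => /=.
    - by move=> x [/subM|->].
    - by left.
    - have ex0 : e != x0 by apply/eqP => ex; apply: nD; rewrite -ex.
      by rewrite /al' alM (negbTE ex0) addr0.
    - move=> x; rewrite /al'; case: (eqVneq x x0) => [->|xx0]; first by move=> _; right.
      by rewrite addr0 => /supM; left.
    - move=> s Hs; rewrite /al' pair_delta; last exact: SE.
      apply: Hc => x Sx nx xx0; apply: Hs => // -[//|/= xe].
      by rewrite xe eqxx in xx0.
  have : `[< Rel (sval M) (sval (exist good _ good')) >].
    apply/asboolP; split => /=; first by move=> x Mx; left.
    move=> x Mx; rewrite /al'; case: (eqVneq x x0) => [xe|]; last by rewrite addr0.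
    by exfalso; apply: nD; rewrite -xe.
  by move=> /Mmax /asboolP [h _]; apply: nD; apply: h; right.
have ts : forall a, tsum (sval M).2 a = 0.
  move=> a; have := PM [:: (a, 1)].
  rewrite fun_pair big_seq1 mul1r; apply.
  by move=> x Sx nx; exfalso; apply: nx; apply: SD.
have := IS (sval M).2 (fun x h => subM _ (supM _ h)) ts e.
by rewrite alM => /eqP; rewrite oner_eq0.
Qed.

Lemma IM J X : J `<=` X -> X `<=` E -> Ind J ->
  exists M, maximal_in [set J' | (J' `<=` E /\ Ind J') /\ J `<=` J' /\ J' `<=` X] M.
Proof.
move=> JX XE IJ.
pose coind (T : set (A -> F)) := forall s,
  (forall x, X x -> ~ T x -> veval s x = 0) -> forall x, X x -> veval s x = 0.
have [T [[TXJ cT] Tmax]] : exists T, (T `<=` X `\` J /\ coind T) /\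
    forall B, T `<` B -> ~ (B `<=` X `\` J /\ coind B).
  apply: (Zorn_bigcup (P := [set T | T `<=` X `\` J /\ coind T])).
  move=> Fm FP tot; split.
    by move=> x [T' FT' T'x]; exact: (FP T' FT').1 x T'x.
  move=> s Hs x Xx.
  case: (pselect (exists T', Fm T')) => [[T1 FT1]|nF]; last first.
    by apply: Hs => // -[T' FT' _]; apply: nF; exists T'.
  have [l Hl] := (finite_seqP _).1 (Supp_fin s).
  have [k [Fk Hk]] : exists k, Fm k /\ forall y, y \in l -> X y -> k y.
    apply: (chain_list (R := fun A B => A `<=` B) (d := fun T => T) FT1 _ tot).
      by move=> i j h y; exact: h.
    move=> y yl Xy; apply: contrapT => nU.
    have : Supp s y by rewrite Hl.
    case => _; rewrite Hs // ?eqxx // => -[T' FT' T'y]; apply: nU; by exists T'.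
  apply: ((FP k Fk).2 s) => // y Xy nk; apply/eqP; apply: contrapT => /negP vy; apply: nk.
  apply: Hk => //; have : Supp s y by split => //; apply: XE.
  by rewrite Hl.
have wB : forall e, X e -> ~ T e -> ~ J e -> exists s, veval s e = 1 /\
    forall x, X x -> ~ T x -> x != e -> veval s x = 0.
  move=> e Xe nT nJ.
  have ncT : ~ coind (T `|` [set e]).
    move=> c; apply: (Tmax (T `|` [set e])).
      split; first by move=> x Tx; left.
      by move=> sub; apply: nT; apply: sub; right.
    split => //; move=> x [Tx|->]; [exact: TXJ|by split].
  have [s [Hs [x [Xx vx]]]] : exists s, (forall x, X x -> ~ (T `|` [set e]) x -> veval s x = 0)
      /\ exists x, X x /\ veval s x != 0.
    apply: contrapT => h; apply: ncT => s Hs x Xx; apply/eqP; apply: contrapT => /negP vx.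
    by apply: h; exists s; split => //; exists x.
  have ve : veval s e != 0.
    apply/negP => /eqP ve; move/negP: vx; apply; apply/eqP; apply: (cT s) => // y Xy nTy.
    case: (eqVneq y e) => [->//|ye]; apply: Hs => //; case => // /= ye'.
    by rewrite ye' eqxx in ye.
  exists (sc (veval s e)^-1 s); split; first by rewrite veval_sc mulVf.
  move=> y Xy nTy ye; rewrite veval_sc (Hs y Xy) ?mulr0 //; case => // /= ye'.
  by rewrite ye' eqxx in ye.
have TJ : forall x, T x -> ~ J x by move=> x /TXJ [].
have corr : forall (l : seq (A -> F)) s, (forall x, X x -> ~ T x -> ~ J x -> veval s x != 0 -> x \in l) ->
    exists s', (forall x, J x -> veval s' x = veval s x) /\
               (forall x, X x -> ~ T x -> ~ J x -> veval s' x = 0).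
  elim => [|f l IH] s H.
    exists s; split => // x Xx nT nJ; apply/eqP; apply: contrapT => /negP h.
    by have := H x Xx nT nJ h.
  case: (pselect (X f /\ ~ T f /\ ~ J f)) => [[Xf [nTf nJf]]|nf].
    have [sf [sf1 sf0]] := wB f Xf nTf nJf.
    have : exists s', (forall x, J x -> veval s' x = veval (s ++ sc (- veval s f) sf) x) /\
        (forall x, X x -> ~ T x -> ~ J x -> veval s' x = 0).
      apply: IH => x Xx nT nJ; rewrite veval_cat veval_sc.
      case: (eqVneq x f) => [->|xf]; first by rewrite sf1 mulr1 addrN eqxx.
      rewrite sf0 // mulr0 addr0 => h; have := H x Xx nT nJ h.
      by rewrite inE (negbTE xf).
    move=> [s' [H1 H2]]; exists s'; split => // x Jx.
    rewrite H1 // veval_cat veval_sc sf0 ?mulr0 ?addr0 //.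
    - exact: JX.
    - by move=> Tx; exact: TJ Tx Jx.
    - by apply/eqP => xf; apply: nJf; rewrite -xf.
  apply: IH => x Xx nT nJ h; have := H x Xx nT nJ h.
  rewrite inE => /orP [/eqP xf|//]; exfalso; apply: nf.
  by rewrite -xf.
pose Bs := X `\` T.
have IB : Ind Bs.
  apply: ind_of_wit; first by move=> x [Xx _]; exact: XE.
  move=> e [Xe nTe]; case: (pselect (J e)) => Je.
    have [s [s1 s0]] := wit_of_ind (subset_trans JX XE) IJ Je.
    have [l Hl] := (finite_seqP _).1 (Supp_fin s).
    have [s' [H1 H2]] : exists s', (forall x, J x -> veval s' x = veval s x) /\
        (forall x, X x -> ~ T x -> ~ J x -> veval s' x = 0).
      apply: (corr l s) => x Xx nT nJ h.
      have : Supp s x by split => //; apply: XE.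
      by rewrite Hl.
    exists s'; split; first by rewrite H1.
    move=> x [Xx nTx] xe; case: (pselect (J x)) => Jx; first by rewrite H1 // s0.
    exact: H2.
  have [s [s1 s0]] := wB e Xe nTe Je; exists s; split => // x [Xx nTx] xe; exact: s0.
exists Bs; split.
  split; first by split => //; move=> x [Xx _]; exact: XE.
  split; last by move=> x [].
  move=> x Jx; split; first exact: JX.
  by move=> Tx; exact: TJ Tx Jx.
move=> N [[NE IN] [JN NX]] BN.
apply/seteqP; split; last exact: BN.
move=> x Nx; split; first exact: NX.
move=> Tx.
have [s [s1 s0]] := wit_of_ind NE IN Nx.
have z : veval s x = 0.
  apply: (cT s _ x (NX x Nx)) => y Xy nTy; apply: s0.
    by apply: BN; split.
  by apply/eqP => yx; apply: nTy; rewrite yx.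
by move: s1; rewrite z => /eqP; rewrite eq_sym oner_eq0.
Qed.

Lemma I3 J J' : J `<=` E -> Ind J -> J' `<=` E -> Ind J' ->
  ~ maximal_in [set I | I `<=` E /\ Ind I] J ->
  maximal_in [set I | I `<=` E /\ Ind I] J' ->
  exists2 x, (J' `\` J) x & (J `|` [set x] `<=` E /\ Ind (J `|` [set x])).
Proof.
move=> JE IJ J'E IJ' nmax [_ maxJ'].
have [N [[NE IN] [JN NJ]]] : exists N, (N `<=` E /\ Ind N) /\ J `<=` N /\ N <> J.
  apply: contrapT => h; apply: nmax; split => // N FN JN.
  by apply: contrapT => NJ; apply: h; exists N.
have [y [Ny nJy]] : exists y, N y /\ ~ J y.
  apply: contrapT => h; apply: NJ; apply/seteqP; split => // x Nx.
  by apply: contrapT => nJ; apply: h; exists x.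
have Jy_in : J `|` [set y] `<=` N by move=> x [/JN|->].
have IJy : Ind (J `|` [set y]) := Ind_sub IN Jy_in.
apply: contrapT => H.
have H' : forall x, J' x -> ~ J x -> ~ Ind (J `|` [set x]).
  move=> x J'x nJx I; apply: H; exists x => //; split => //.
  move=> z [/JE //|->]; exact: J'E.
have nJ'y : ~ J' y by move=> J'y; apply: (H' y J'y nJy IJy).
have Jyy : (J `|` [set y]) y by right.
have [s [s1 s0]] := wit_of_ind (subset_trans Jy_in NE) IJy Jyy.
have sJ : forall x, J x -> veval s x = 0.
  move=> x Jx; apply: s0; first by left.
  by apply/eqP => xy; apply: nJy; rewrite -xy.
have nIJ' : ~ Ind (J' `|` [set y]).
  move=> I.
  have e := maxJ' (J' `|` [set y]) (conj (fun z h => match h with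
      | or_introl h => J'E z h | or_intror h => eq_ind_r E (NE y Ny) h end) I)
      (fun x h => or_introl h).
  by apply: nJ'y; rewrite -e; right.
have [al [sup [ts [x0 ax0]]]] : exists al, (forall x, al x != 0 -> (J' `|` [set y]) x) /\
    (forall a, tsum al a = 0) /\ exists x, al x != 0.
  apply: contrapT => h; apply: nIJ' => al sup ts x; apply/eqP; apply: contrapT => /negP ne.
  by apply: h; exists al; split => //; split => //; exists x.
have aly : al y = 0.
  have : pair al s = 0 by rewrite fun_pair big1 // => p _; rewrite ts mulr0.
  rewrite (pair_single (NE y Ny)) ?s1 ?mulr1 // => x Ex xy.
  case: (eqVneq (al x) 0) => [->|ax]; first by rewrite mul0r.
  have J'x : J' x.
    by case: (sup x ax) => // /= xy'; rewrite xy' eqxx in xy.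
  case: (pselect (J x)) => Jx; first by rewrite sJ ?mulr0.
  have nIx := H' x J'x Jx.
  have [be [bsup [bts [z bz]]]] : exists be, (forall w, be w != 0 -> (J `|` [set x]) w) /\
      (forall a, tsum be a = 0) /\ exists w, be w != 0.
    apply: contrapT => h; apply: nIx => be bsup bts w; apply/eqP; apply: contrapT => /negP ne.
    by apply: h; exists be; split => //; split => //; exists w.
  have bx : be x != 0.
    apply/negP => /eqP bx0; move/negP: bz; apply; apply/eqP; apply: IJ bts z => w bw.
    by case: (bsup w bw) => // /= wx; rewrite wx bx0 eqxx in bw.
  have : pair be s = 0 by rewrite fun_pair big1 // => p _; rewrite bts mulr0.
  have -> : pair be s = be x * veval s x.
    apply: pair_single => // w Ew wx; case: (eqVneq (be w) 0) => [->|bw]; first by rewrite mul0r.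
    case: (bsup w bw) => [Jw|/= wx']; first by rewrite sJ ?mulr0.
    by rewrite wx' eqxx in wx.
  by move/eqP; rewrite mulf_eq0 (negbTE bx) /= => /eqP ->; rewrite mulr0.
move/negP: ax0; apply; apply/eqP; apply: IJ' ts x0 => w aw.
by case: (sup w aw) => // /= wy; rewrite wy aly eqxx in aw.
Qed.

End Thin.

Theorem theorem6p1 (F : fieldType) (A : Type) (E : set (A -> F)) :
  thin E ->
  matroid E [set I | I `<=` E /\ thinly_independent I].
Proof.
move=> thinE.
have -> : [set I | I `<=` E /\ thinly_independent I] = [set I | I `<=` E /\ Ind E I].
  apply/seteqP; split => I [IE h]; split => //; by apply/(IndE thinE IE).
split.
- by move=> J [].
- by split => //; exact: Ind0.
- move=> J J' [JE IJ] sub; split; [exact: subset_trans sub JE | exact: Ind_sub IJ sub].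
- move=> J J' [JE IJ] nm mJ'; have [JE' IJ'] := mJ'.1; exact: I3.
- by move=> J X JX XE [_ IJ]; exact: IM.
Qed.
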